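(* Assume $n > d_{\max}$. For all integers $k_1,\dots,k_x$ with $t_i \le k_i \le a_i$ for every $i$ and $k=\sum_{i=1}^x k_i \le n-d_{\max}$, \[ R(k_1,\dots,k_x) \le \prod_{i=1}^{x}\left(1-\left(1-\frac{k}{n-d_i}\right)^{d_i}\right)^{k_i-t_i} \le \prod_{i=1}^x\left(\frac{d_i\, k}{n-d_{\max}}\right)^{k_i-t_i}. \]
   Context: Random graph model: $V$ is a set of $n$ vertices, $B\subseteq V$ a target set with $|B|=t$, and each $v\in V$ has a prescribed out-degree $d_v$ with $1\le d_{\min}\le d_v\le d_{\max}$ (constants). For each $v$ independently, its out-neighbour set is chosen uniformly at random among all $d_v$-element subsets of $V$. Let $d_1,\dots,d_x$ be the distinct values of the $d_v$, $a_i$ the number of vertices of out-degree $d_i$, and $t_i$ the number of vertices of $B$ of out-degree $d_i$. For a set $S\subseteq V$ with $B\subseteq S$ that contains exactly $k_i$ vertices of out-degree $d_i$ for each $i$, $R(k_1,\dots,k_x)$ denotes the probability that every vertex of $S$ has a directed path to a vertex of $B$ all of whose vertices lie in $S$ (by symmetry this depends only on $k_1,\dots,k_x$). *)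

(* Defs.v *)
From mathcomp Require Import all_boot all_order all_algebra.
Set Implicit Arguments. Unset Strict Implicit. Unset Printing Implicit Defensive.
Import Order.TTheory GRing.Theory Num.Theory.

(* A configuration assigns to every vertex v an
   out-neighbour set f v; it is admissible iff #|f v| = d v for all v.
   The random model (independent uniform d_v-subsets) is the uniform
   distribution on admissible configurations. *)
Definition configs (n : nat) (d : 'I_n -> nat) : {set {ffun 'I_n -> {set 'I_n}}} :=
  [set f : {ffun 'I_n -> {set 'I_n}} | [forall v, #|f v| == d v]].

Definition arcS (n : nat) (f : {ffun 'I_n -> {set 'I_n}}) (S : {set 'I_n}) : rel 'I_n :=
  fun u w => [&& u \in S, w \in S & w \in f u].

Definition good (n : nat) (B S : {set 'I_n}) (f : {ffun 'I_n -> {set 'I_n}}) : bool :=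
  [forall u in S, [exists b in B, connect (arcS f S) u b]].

Definition probR (n : nat) (d : 'I_n -> nat) (B S : {set 'I_n}) : rat :=
  (#|[set f in configs d | good B S f]|)%:R / (#|configs d|)%:R.

Definition cnt (n : nat) (d : 'I_n -> nat) (A : {set 'I_n}) (j : nat) : nat :=
  #|[set v in A | d v == j]|.

Definition degvals (n : nat) (d : 'I_n -> nat) : seq nat :=
  undup [seq d v | v <- enum 'I_n].

(* Main.v *)
Require Import Defs.
From mathcomp Require Import all_boot all_order all_algebra.
Import Order.TTheory GRing.Theory Num.Theory.
Local Open Scope ring_scope.
From mathcomp Require Import zify ring lra.
Lemma bern (y : rat) (j : nat) : 0 <= y -> y <= 1 -> 1 - j%:R * y <= (1 - y) ^+ j.
Proof.
move=> y0 y1; elim: j => [|j IH]; first by rewrite expr0 mul0r subr0.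
rewrite exprS -addn1 natrD.
have hj : (0 : rat) <= j%:R by apply: ler0n.
have h0 : 0 <= 1 - y by lra.
have := ler_wpM2l h0 IH.
nra.
Qed.

Lemma ffact_bound (n d k : nat) : (d < n)%N -> (k <= n - d)%N ->
  forall d', (d' <= d)%N ->
  (1 - k%:R / (n - d)%:R : rat) ^+ d' * (n ^_ d')%:R <= ((n - k) ^_ d')%:R.
Proof.
move=> dn kn; elim=> [|d' IH] hd; first by rewrite expr0 mul1r.
have hb : (0 : rat) < (n - d)%:R by rewrite ltr0n; lia.
have hx0 : 0 <= (1 - k%:R / (n - d)%:R : rat).
  rewrite subr_ge0 ler_pdivrMr // mul1r ler_nat; lia.
rewrite !ffactnSr exprS natrM.
have IH' := IH (ltnW hd).
have step : (1 - k%:R / (n - d)%:R) * (n - d')%:R <= ((n - k - d')%N%:R : rat).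
  have -> : ((n - k - d')%N%:R : rat) = (n - d')%:R - k%:R.
    by rewrite -natrB; [congr (_%:R); lia | lia].
  rewrite mulrBl mul1r lerD2l lerN2 mulrAC ler_pdivlMr // ler_wpM2l ?ler0n //.
  rewrite ler_nat; lia.
have g0 : (0 : rat) <= (n ^_ d')%:R by apply: ler0n.
have g1 : (0 : rat) <= (n - d')%:R by apply: ler0n.
set x := (1 - k%:R / (n - d)%:R : rat) in hx0 IH' step *.
rewrite natrM.
have -> : x * x ^+ d' * ((n ^_ d')%:R * (n - d')%:R) = (x ^+ d' * (n ^_ d')%:R) * (x * (n - d')%:R) by ring.
apply: ler_pM => //; [by rewrite mulr_ge0 ?exprn_ge0 | by rewrite mulr_ge0].
Qed.
Lemma regroup n (d : 'I_n -> nat) (X : {set 'I_n}) (g : nat -> rat) :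
  \prod_(v in X) g (d v) = \prod_(j <- degvals d) g j ^+ cnt d X j.
Proof.
rewrite /cnt.
under [RHS]eq_bigr => j _ do rewrite -prodr_const.
rewrite (exchange_big_dep (fun v => v \in X)) /=; last by move=> j v _; rewrite inE => /andP[].
apply: eq_bigr => v vX.
rewrite (eq_bigl (fun j => d v == j)); last by move=> j; rewrite inE vX.
rewrite (eq_bigr (fun _ => g (d v))); last by move=> j /eqP ->.
rewrite big_const_seq.
have -> : count (fun j => d v == j) (degvals d) = 1%N.
  rewrite (eq_count (a2 := pred1 (d v))); last by move=> j; rewrite /= eq_sym.
  rewrite count_uniq_mem ?undup_uniq // mem_undup.
  by rewrite (map_f d) // mem_enum.
by rewrite /= mulr1.
Qed.
Lemma ratio_bound (n d k : nat) : (d < n)%N -> (k <= n - d)%N ->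
  (('C(n, d) - 'C(n - k, d))%N%:R / ('C(n, d))%:R : rat) <=
   1 - (1 - k%:R / (n - d)%:R) ^+ d.
Proof.
move=> dn kn.
have c0 : (0 : rat) < ('C(n, d))%:R by rewrite ltr0n bin_gt0; lia.
have f0 : (0 : rat) < (d`!)%:R by rewrite ltr0n fact_gt0.
rewrite natrB; last by apply: leq_bin2l; lia.
rewrite mulrBl divff ?gt_eqF // lerD2l lerN2.
rewrite ler_pdivlMr //.
have := @ffact_bound n d k dn kn d (leqnn d).
rewrite -!bin_ffact !natrM => h.
rewrite -(ler_pM2r f0) -mulrA. exact: h.
Qed.

Lemma card_F n (j : nat) :
  #|[pred A : {set 'I_n} | #|A| == j]| = 'C(n, j).
Proof.
rewrite -[n in 'C(n, _)]card_ord -card_draws.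
by apply: eq_card => A; rewrite !inE.
Qed.

Lemma card_G n (j : nat) (S : {set 'I_n}) :
  #|[pred A : {set 'I_n} | (#|A| == j) && (A :&: S != set0)]| = ('C(n, j) - 'C(n - #|S|, j))%N.
Proof.
have h := cardID [pred A : {set 'I_n} | A \subset ~: S] [pred A : {set 'I_n} | #|A| == j].
have h1 : #|[predI [pred A : {set 'I_n} | #|A| == j] & [pred A : {set 'I_n} | A \subset ~: S]]| = 'C(n - #|S|, j).
  have -> : (n - #|S|)%N = #|~: S| by have := cardsC S; rewrite card_ord; lia.
  rewrite -cards_draws.
  by apply: eq_card => A; rewrite !inE andbC.
rewrite card_F h1 in h.
rewrite -h addKn.
apply: eq_card => A; rewrite !inE setI_eq0 disjoints_subset andbC.
by [].
Qed.
Lemma card_fam n (F : 'I_n -> pred {set 'I_n}) :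
  #|(family F : simpl_pred {ffun 'I_n -> {set 'I_n}})| = (\prod_v #|F v|)%N.
Proof.
by rewrite card_family foldrE big_image.
Qed.

Lemma good_hit n (B S : {set 'I_n}) f u : good B S f -> u \in S :\: B -> f u :&: S != set0.
Proof.
move=> /forallP g; rewrite inE => /andP[uB uS].
have /implyP/(_ uS)/existsP[b /andP[bB /connectP[p pth lst]]] := g u.
case: p pth lst => [|w p] /=; first by move=> _ eb; rewrite -eb bB in uB.
case/andP=> /and3P[_ wS wf] _ _.
by apply/set0Pn; exists w; rewrite inE wf wS.
Qed.

Theorem lemma1 (n : nat) (d : 'I_n -> nat) (dmin dmax : nat) (B S : {set 'I_n}) :
  (1 <= dmin)%N ->
  (forall v, dmin <= d v <= dmax)%N ->
  (dmax < n)%N ->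
  B \subset S ->
  (#|S| <= n - dmax)%N ->
  let k := #|S| in
  probR d B S <=
    \prod_(j <- degvals d)
       (1 - (1 - (k%:R : rat) / (n - j)%:R) ^+ j) ^+ (cnt d S j - cnt d B j)
  /\
  \prod_(j <- degvals d)
       (1 - (1 - (k%:R : rat) / (n - j)%:R) ^+ j) ^+ (cnt d S j - cnt d B j)
  <= \prod_(j <- degvals d) ((j * k)%:R / (n - dmax)%:R) ^+ (cnt d S j - cnt d B j).
Proof.
move=> hdmin hd hn hBS hk k.
pose g (j : nat) := (1 - (1 - (k%:R : rat) / (n - j)%:R) ^+ j).
have gb : forall j, (j <= dmax)%N -> 0 <= g j /\ g j <= (j * k)%:R / (n - dmax)%:R.
  move=> j hj.
  have hb : (0 : rat) < (n - j)%:R by rewrite ltr0n; lia.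
  have hb' : (0 : rat) < (n - dmax)%:R by rewrite ltr0n; lia.
  have y0 : (0 : rat) <= k%:R / (n - j)%:R by rewrite divr_ge0 ?ler0n // ltW.
  have y1 : (k%:R : rat) / (n - j)%:R <= 1 by rewrite ler_pdivrMr // mul1r ler_nat; lia.
  split.
    rewrite /g subr_ge0 exprn_ile1 //; lra.
  apply: (le_trans (y := j%:R * (k%:R / (n - j)%:R))).
    rewrite /g; have := @bern _ j y0 y1; lra.
  rewrite natrM -mulrA ler_wpM2l ?ler0n // ler_wpM2l ?ler0n //.
  rewrite lef_pV2 ?posrE // ler_nat; lia.
have degb : forall j, j \in degvals d -> (j <= dmax)%N.
  by move=> j; rewrite mem_undup => /mapP[v _ ->]; case/andP: (hd v).
split; last first.
  rewrite big_seq [X in _ <= X]big_seq.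
  apply: ler_prod => j jin; have [g0 g1] := gb j (degb j jin).
  apply/andP; split; first by rewrite exprn_ge0.
  by apply: lerXn2r; rewrite ?nnegrE //; apply: le_trans g1.
pose F v := [pred A : {set 'I_n} | #|A| == d v].
pose G v := [pred A : {set 'I_n} | (#|A| == d v) && ((v \in S :\: B) ==> (A :&: S != set0))].
have cF v : #|F v| = 'C(n, d v) := card_F n (d v).
have cG v : #|G v| = if v \in S :\: B then ('C(n, d v) - 'C(n - k, d v))%N else 'C(n, d v).
  case: ifP => vin.
    by rewrite -card_G; apply: eq_card => A; rewrite [in LHS]inE /= vin.
  by rewrite -cF; apply: eq_card => A; rewrite [in LHS]inE /= vin andbT.
have cconf : #|configs d| = (\prod_v #|F v|)%N.
  rewrite -card_fam; apply: eq_card => f; rewrite inE.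
  by apply/forallP/familyP => h v; have := h v; rewrite inE.
have cgood : (#|[set f in configs d | good B S f]| <= \prod_v #|G v|)%N.
  rewrite -card_fam; apply: subset_leq_card; apply/subsetP => f; rewrite !inE => /andP[fc fg].
  apply/familyP => v; rewrite inE; apply/andP; split; first by move/forallP: fc => /(_ v).
  by apply/implyP => vin; exact: good_hit fg vin.
have Cpos v : (0 < 'C(n, d v))%N by rewrite bin_gt0; have := hd v; lia.
rewrite /probR.
apply: (le_trans (y := (\prod_v #|G v|)%:R / (\prod_v #|F v|)%:R)).
  by rewrite -cconf ler_wpM2r ?invr_ge0 ?ler0n // ler_nat.
rewrite natr_prod natr_prod -prodf_div.
apply: (le_trans (y := \prod_v (if v \in S :\: B then g (d v) else 1))).
  apply: ler_prod => v _; rewrite cG cF; case: ifP => vin.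
    rewrite divr_ge0 ?ler0n //=; apply: ratio_bound; have := hd v; lia.
  by rewrite divff ?pnatr_eq0 -?lt0n ?Cpos // lexx ler01.
rewrite -big_mkcond regroup le_eqVlt; apply/orP; left; apply/eqP.
apply: eq_bigr => j _; congr (_ ^+ _).
rewrite /cnt; have := cardsID B [set v in S | d v == j].
have -> : [set v in S | d v == j] :&: B = [set v in B | d v == j].
  apply/setP => v; rewrite !inE; case vB : (v \in B); case vS : (v \in S) => //=; rewrite ?andbT ?andbF //.
  by move: (subsetP hBS v vB); rewrite vS.
have -> : [set v in S | d v == j] :\: B = [set v in S :\: B | d v == j].
  by apply/setP => v; rewrite !inE; case: (v \in B); case: (v \in S).
lia.
Qed.
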